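(* There exists an absolute constant $c\in(0,1]$ such that for every sufficiently large positive integer $n$ there exist a quartic form $q(x_1,\dots,x_n)=\sum_{\alpha\in\{0,1\}^n,\,|\alpha|=4}d_\alpha x^\alpha$ with $|q(x)|\le1$ for all $x\in\{-1,1\}^n$, and pairwise commuting contractions $A_1,\dots,A_n\in L(\mathbb{R}^{2n+2})$, such that $$\Big\|\sum_{i,j,k,\ell=1}^n(T_q)_{i,j,k,\ell}A_iA_jA_kA_\ell\Big\|\ge c\sqrt n.$$
   Context: For a form $q(x)=\sum_{|\alpha|=4}d_\alpha x^\alpha$, $T_q\in\mathbb{R}^{n\times n\times n\times n}$ is the symmetric tensor $(T_q)_{i,j,k,\ell}=d_{e_i+e_j+e_k+e_\ell}/\tau(i,j,k,\ell)$, where $\tau$ is the number of distinct permutations of $(i,j,k,\ell)$. A contraction is a linear map of operator norm at most $1$; $\|\cdot\|$ denotes the operator norm. *)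

(* Defs.v *)
From HB Require Import structures.
From mathcomp Require Import all_boot all_order all_algebra.
From mathcomp Require Import classical_sets reals Rstruct.
Notation R := Rdefinitions.R.
Set Implicit Arguments. Unset Strict Implicit. Unset Printing Implicit Defensive.
Import Order.TTheory GRing.Theory Num.Theory.
Local Open Scope ring_scope.

Definition norm2 (m : nat) (x : 'cV[R]_m) : R :=
  Num.sqrt (\sum_(i < m) x i 0 ^+ 2).

Definition opnorm (m : nat) (M : 'M[R]_m) : R :=
  sup (fun r : R => exists x : 'cV[R]_m, norm2 x <= 1 /\ r = norm2 (M *m x)).

(* A multilinear quartic form q(x) = sum_{alpha in {0,1}^n, |alpha| = 4} d_alpha x^alpha;
   the 0/1 multi-index alpha is identified with its support S (a 4-subset of 'I_n). *)
Definition quartic_eval (n : nat) (d : {set 'I_n} -> R) (x : 'I_n -> R) : R :=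
  \sum_(S : {set 'I_n} | #|S| == 4%N) d S * \prod_(i in S) x i.

Definition midx (n : nat) (i j k l : 'I_n) (m : 'I_n) : nat :=
  ((i == m) + (j == m) + (k == m) + (l == m))%N.

(* coefficient d_alpha of q at an arbitrary multi-index alpha (0 if alpha is not a
   0/1 multi-index, since q has no such monomial) *)
Definition coef_at (n : nat) (d : {set 'I_n} -> R) (alpha : 'I_n -> nat) : R :=
  if [forall m, (alpha m <= 1)%N] then d [set m | alpha m == 1%N] else 0.

(* tau(i,j,k,l) = number of distinct permutations of (i,j,k,l) *)
Definition tau (n : nat) (i j k l : 'I_n) : nat :=
  (4`! %/ \prod_(m : 'I_n) (midx i j k l m)`!)%N.

Definition Tq (n : nat) (d : {set 'I_n} -> R) (i j k l : 'I_n) : R :=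
  coef_at d (midx i j k l) / (tau i j k l)%:R.

(* Main.v *)
Set Warnings "-notation-overridden,-ambiguous-paths".
Require Import Defs.
From HB Require Import structures.
From mathcomp Require Import all_boot all_order all_algebra.
From mathcomp Require Import classical_sets reals Rstruct.
From mathcomp Require Import zify ring lra.
From Stdlib Require PeanoNat.
Import Order.TTheory GRing.Theory Num.Theory.
Local Open Scope ring_scope.
Definition sg (b : bool) : R := if b then 1 else -1.
Definition agree {P : finType} (e s : P -> bool) : nat := (\sum_(p : P) (e p == s p))%N.

Lemma sum_pow_agree (P : finType) (s : P -> bool) (b : R) :
  \sum_(e : {ffun P -> bool}) b ^+ agree e s = (1 + b) ^+ #|P|.
Proof.
rewrite -prodr_const.
have -> : \prod_(i in P) (1 + b) = \prod_(p : P) \sum_(c : bool) b ^+ (c == s p).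
  by apply: eq_bigr => p _; rewrite big_bool /=; case: (s p) => /=; rewrite ?expr0 ?expr1 // addrC.
rewrite bigA_distr_bigA /=.
by apply: eq_bigr => e _; rewrite /agree prodrXr.
Qed.

Lemma bernoulli (x : R) (k : nat) : 0 <= x -> 1 + k%:R * x <= (1 + x) ^+ k.
Proof.
move=> hx; elim: k => [|k IH]; first by rewrite mul0r addr0 expr0.
rewrite exprS -natr1.
have h1 : 0 <= 1 + x by lra.
apply: le_trans (ler_wpM2l h1 IH).
have : 0 <= k%:R * x * x by apply: mulr_ge0 => //; apply: mulr_ge0.
nra.
Qed.

Lemma rev_bernoulli (x : R) (k : nat) : 0 <= x -> (1 + x) ^+ k * (1 - k%:R * x) <= 1.
Proof.
move=> hx; elim: k => [|k IH]; first by rewrite mul0r subr0 expr0 mulr1.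
rewrite exprSr -natr1.
have h0 : 0 <= (1 + x) ^+ k by apply: exprn_ge0; lra.
have h2 : 0 <= (1 + x) ^+ k * ((k%:R + 1) * x * x).
  have hk : 0 <= k%:R :> R := ler0n _ _.
  apply: mulr_ge0 => //; apply: mulr_ge0 => //; apply: mulr_ge0 => //; lra.
have -> : (1 + x) ^+ k * (1 + x) * (1 - (k%:R + 1) * x) =
   (1 + x) ^+ k * (1 - k%:R * x) - (1 + x) ^+ k * ((k%:R + 1) * x * x) by ring.
move: IH h2; set A := _ * (1 - _); set B := _ * (_ * x * x); move=> *; lra.
Qed.

Definition jpk {m : nat} (j k : 'I_m) : 'I_(m + m) :=
  Ordinal (leq_add (ltn_ord j) (ltnW (ltn_ord k)) : (j + k < m + m)%N).

Section Prob.
Variable s : nat.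
Hypothesis hs : (0 < s)%N.
Let m := (s * s)%N.
Let N := (m * m)%N.
Let W := (s * (5 * m + 2))%N.
Let P := ('I_m * 'I_m)%type.
Let T := (bool * {ffun 'I_(m + m) -> bool} * {ffun 'I_m -> bool} * {ffun 'I_m -> bool})%type.
Definition sigmaT (t : T) (p : P) : bool :=
  t.1.1.1 == (t.1.1.2 (jpk p.1 p.2) == (t.1.2 p.1 == t.2 p.2)).

Lemma card_T : #|{: T}| = (2 * 2 ^ (m + m) * 2 ^ m * 2 ^ m)%N.
Proof. by rewrite !card_prod !card_ffun !card_bool !card_ord. Qed.

Lemma card_Om : #|{: {ffun P -> bool}}| = (2 ^ N)%N.
Proof. by rewrite card_ffun card_bool card_prod !card_ord. Qed.

Lemma markov_t (t : T) (d : R) : 0 <= d ->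
  (\sum_(e : {ffun P -> bool}) ((N + W <= 2 * agree e (sigmaT t))%N)%:R) * (1 + d) ^+ (N + W)
   <= (1 + (1 + d) ^+ 2) ^+ N.
Proof.
move=> hd.
have -> : N = #|{: P}| by rewrite card_prod !card_ord.
rewrite -[X in _ <= X](sum_pow_agree _ (sigmaT t)) mulr_suml.
apply: ler_sum => e _.
case: leqP => h; last by rewrite mul0r exprn_ge0 // exprn_ge0 //; lra.
rewrite mul1r -exprM; apply: ler_weXn2l; first lra.
exact: h.
Qed.


Lemma sum1_ff (U : finType) : \sum_(u : U) (1 : R) = #|{: U}|%:R.
Proof. by rewrite sumr_const. Qed.

Lemma exists_good_e : exists e : {ffun P -> bool},
  forall t : T, (2 * agree e (sigmaT t) < N + W)%N.
Proof.
suff : [exists e : {ffun P -> bool}, [forall t : T, (2 * agree e (sigmaT t) < N + W)%N]].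
  by move=> /existsP [e /forallP He]; exists e.
apply: contraT; rewrite negb_exists => /forallP Hall.
set dl : R := s%:R^-1.
have hs0 : 0 < s%:R :> R by rewrite ltr0n.
have hdl : 0 <= dl by rewrite invr_ge0 ltW.
have hsd : s%:R * dl = 1 by rewrite mulfV // gt_eqF.
have key : (2 ^ N)%:R * (1 + dl) ^+ (N + W) <= (2 * 2 ^ (m + m) * 2 ^ m * 2 ^ m)%:R * (1 + (1 + dl) ^+ 2) ^+ N.
  rewrite -card_Om -card_T -!sum1_ff !mulr_suml.
  apply: (@le_trans _ _ (\sum_(e : {ffun P -> bool}) \sum_(t : T) ((N + W <= 2 * agree e (sigmaT t))%N)%:R * (1 + dl) ^+ (N + W))).
    apply: ler_sum => e _.
    have /forallPn [t Ht] := Hall e.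
    rewrite -mulr_suml; apply: ler_wpM2r; first by apply: exprn_ge0; lra.
    rewrite -leqNgt in Ht; rewrite (bigD1 t) //= Ht lerDl.
    by apply: sumr_ge0 => ? _; rewrite ler0n.
  rewrite exchange_big /=; apply: ler_sum => t _; rewrite mul1r -mulr_suml.
  exact: markov_t.
set x : R := dl ^+ 2 / 2.
have hx : 0 <= x by rewrite /x; apply: divr_ge0 => //; apply: exprn_ge0.
have hmx : m%:R * x = 1 / 2.
  by rewrite /x /m natrM mulrA -expr2 -exprMn hsd expr1n.
have b1 : 1 + (1 + dl) ^+ 2 <= 2 * (1 + x) * (1 + dl).
  rewrite /x; have : 0 <= dl ^+ 3 by apply: exprn_ge0.
  move=> h3; rewrite -subr_ge0; have -> : 2 * (1 + dl ^+ 2 / 2) * (1 + dl) - (1 + (1 + dl) ^+ 2) = dl ^+ 3 by field.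
  done.
have b2 : (1 + x) ^+ m <= 2.
  have := @rev_bernoulli x m hx; rewrite hmx => h; lra.
have b3 : 2 <= (1 + dl) ^+ s.
  have := @bernoulli dl s hdl; rewrite hsd => h; lra.
have e1 : (1 + (1 + dl) ^+ 2) ^+ N <= 2 ^+ N * 2 ^+ m * (1 + dl) ^+ N.
  apply: le_trans (lerXn2r N _ _ b1) _; try by rewrite nnegrE; apply: addr_ge0 => //; apply: exprn_ge0; lra.
    rewrite nnegrE; apply: mulr_ge0; [apply: mulr_ge0|]; lra.
  rewrite !exprMn; apply: ler_wpM2r; first by apply: exprn_ge0; lra.
  apply: ler_wpM2l; first by apply: exprn_ge0.
  rewrite /N exprM; apply: lerXn2r => //; rewrite nnegrE //; apply: exprn_ge0; lra.
have e2 : 2 ^+ (5 * m + 2) <= (1 + dl) ^+ W.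
  rewrite /W mulnC exprM; apply: lerXn2r => //; rewrite nnegrE //; apply: exprn_ge0; lra.
move: key; rewrite !natrM !natrX exprD mulrA.
set A := 2%:R ^+ N * (1 + dl) ^+ N.
have hA : 0 < A by apply: mulr_gt0; apply: exprn_gt0; lra.
move=> key.
have E : (2:R) * 2 ^+ (m + m) * 2 ^+ m * 2 ^+ m * 2 ^+ m = 2 ^+ (5 * m + 1).
  rewrite -{1}(expr1 (2:R)) -!exprD; congr (_ ^+ _); lia.
have : A * 2 ^+ (5 * m + 2) <= A * 2 ^+ (5 * m + 1).
  apply: le_trans (_ : A * (1 + dl) ^+ W <= _); first by apply: ler_wpM2l => //; apply: ltW.
  apply: (le_trans key).
  have h4 : 0 <= (2:R) * 2 ^+ (m + m) * 2 ^+ m * 2 ^+ m.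
    by rewrite !mulr_ge0 // exprn_ge0.
  apply: le_trans (ler_wpM2l h4 e1) _.
  rewrite -E /A le_eqVlt; apply/orP; left; apply/eqP; ring.
rewrite ler_pM2l // ler_eXn2l; [lia|lra].
Qed.

End Prob.

Lemma sgM (a b : bool) : sg a * sg b = sg (a == b).
Proof. by case: a; case: b; rewrite /sg /= ?mulr1 ?mul1r ?mulrNN ?mulr1. Qed.

Lemma sg_sign (x : R) : x = 1 \/ x = -1 -> x = sg (x == 1).
Proof.
case=> ->; rewrite /sg ?eqxx //.
have -> : (-1 == 1 :> R) = false by apply: lt_eqF; lra.
done.
Qed.

Lemma sum_sg (U : finType) (c : U -> bool) :
  \sum_(u : U) sg (c u) = 2 * (\sum_(u : U) (c u : nat))%N%:R - #|{: U}|%:R.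
Proof.
rewrite natr_sum mulr_sumr -sum1_ff -sumrB; apply: eq_bigr => u _.
by rewrite /sg; case: (c u) => /=; lra.
Qed.

Lemma cube_bound (s : nat) : (0 < s)%N -> exists e : 'I_(s*s) -> 'I_(s*s) -> bool,
  forall (x : 'I_(s*s + s*s) -> R) (y z : 'I_(s*s) -> R),
   (forall i, x i = 1 \/ x i = -1) -> (forall i, y i = 1 \/ y i = -1) ->
   (forall i, z i = 1 \/ z i = -1) ->
   `|\sum_(j < s*s) \sum_(k < s*s) sg (e j k) * x (jpk j k) * y j * z k|
     <= (s * (5 * (s*s) + 2))%:R.
Proof.
move=> hs; have [e He] := @exists_good_e s hs.
exists (fun j k => e (j, k)) => x y z hx hy hz.
pose bx : {ffun 'I_(s*s+s*s) -> bool} := [ffun i => x i == 1].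
pose by_ : {ffun 'I_(s*s) -> bool} := [ffun i => y i == 1].
pose bz : {ffun 'I_(s*s) -> bool} := [ffun i => z i == 1].
pose t1 := (true, bx, by_, bz); pose t0 := (false, bx, by_, bz).
have := He t1; have := He t0.
set K := agree e (sigmaT s t1); set K' := agree e (sigmaT s t0).
have hKK : (K + K')%N = (s * s * (s * s))%N.
  rewrite /K /K' /agree -big_split /=.
  rewrite -[in RHS](card_ord (s*s)) -card_prod -sum1_card.
  apply: eq_bigr => p _; rewrite /sigmaT /=.
  by case: (e p); case: (bx _ == _).
have -> : \sum_(j < s*s) \sum_(k < s*s) sg (e (j, k)) * x (jpk j k) * y j * z k
    = \sum_(p : 'I_(s*s) * 'I_(s*s)) sg (e p == sigmaT s t1 p).
  rewrite pair_bigA /=; apply: eq_bigr => [[j k]] _ /=.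
  rewrite (sg_sign _ (hx _)) (sg_sign _ (hy _)) (sg_sign _ (hz _)) /sigmaT /= !ffunE.
  by rewrite -!mulrA !sgM.
rewrite sum_sg card_prod !card_ord -/K => h0 h1.
have h2 : (2 * K <= s * s * (s * s) + s * (5 * (s * s) + 2))%N by lia.
have h3 : (s * s * (s * s) <= 2 * K + s * (5 * (s * s) + 2))%N by lia.
move: h2 h3; rewrite -!(ler_nat R) !natrD !natrM => h2 h3.
rewrite ler_norml; apply/andP; split; rewrite ?natrM; lra.
Qed.

Lemma wcs {U : finType} (w v : U -> R) : (forall b, 0 <= w b) ->
  (\sum_b w b * v b) ^+ 2 <= (\sum_b w b) * (\sum_b w b * v b ^+ 2).
Proof.
move=> hw.
have E1 : (\sum_b w b * v b) ^+ 2 = \sum_b \sum_b' (w b * v b) * (w b' * v b').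
  by rewrite expr2 mulr_suml; apply: eq_bigr => b _; rewrite mulr_sumr.
have E2 : (\sum_b w b) * (\sum_b w b * v b ^+ 2) = \sum_b \sum_b' w b * (w b' * v b' ^+ 2).
  by rewrite mulr_suml; apply: eq_bigr => b _; rewrite mulr_sumr.
have E3 : (\sum_b w b) * (\sum_b w b * v b ^+ 2) = \sum_b \sum_b' w b' * (w b * v b ^+ 2).
  rewrite mulrC mulr_suml; apply: eq_bigr => b _; rewrite mulr_sumr; apply: eq_bigr => b' _; ring.
rewrite E1 -(@ler_pM2l _ 2) // [X in X <= _]mulr_sumr.
apply: (@le_trans _ _ (\sum_b \sum_b' (w b * (w b' * v b' ^+ 2) + w b' * (w b * v b ^+ 2)))).
  apply: ler_sum => b _; rewrite mulr_sumr; apply: ler_sum => b' _.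
  rewrite -subr_ge0.
  have -> : (w b * (w b' * v b' ^+ 2) + w b' * (w b * v b ^+ 2)) - 2 * (w b * v b * (w b' * v b'))
     = w b * w b' * (v b - v b') ^+ 2 by ring.
  by apply: mulr_ge0; [apply: mulr_ge0|apply: sqr_ge0].
rewrite le_eqVlt; apply/orP; left; apply/eqP.
under eq_bigr do rewrite big_split /=.
rewrite big_split /= -E2 -E3; ring.
Qed.

Lemma schur {U : finType} (B : U -> U -> R) (u : U -> R) :
  (forall c, \sum_b `|B b c| <= 1) -> (forall b, \sum_c `|B b c| <= 1) ->
  \sum_c (\sum_b B b c * u b) ^+ 2 <= \sum_b u b ^+ 2.
Proof.
move=> hc hb.
apply: (@le_trans _ _ (\sum_c \sum_b `|B b c| * u b ^+ 2)).
  apply: ler_sum => c _.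
  apply: (@le_trans _ _ ((\sum_b `|B b c| * `|u b|) ^+ 2)).
    rewrite -[X in X <= _]ger0_norm ?sqr_ge0 // normrX lerXn2r ?nnegrE ?normr_ge0 //.
      by apply: sumr_ge0 => b _; apply: mulr_ge0; apply: normr_ge0.
    by apply: (le_trans (ler_norm_sum _ _ _)); apply: ler_sum => b _; rewrite normrM.
  apply: le_trans (wcs _ _ _) _; first by move=> b; apply: normr_ge0.
  under [X in _ * X <= _]eq_bigr do rewrite real_normK ?num_real //.
  rewrite -[X in _ <= X]mul1r; apply: ler_wpM2r => //.
  by apply: sumr_ge0 => b _; apply: mulr_ge0; [apply: normr_ge0|apply: sqr_ge0].
rewrite exchange_big /=; apply: ler_sum => b _.
rewrite -mulr_suml -[X in _ <= X]mul1r; apply: ler_wpM2r => //; apply: sqr_ge0.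
Qed.
Lemma sum_ind {U : finType} (a : U) (F : U -> R) : \sum_u (u == a)%:R * F u = F a.
Proof.
rewrite (bigD1 a) //= eqxx mul1r big1 ?addr0 // => u /negbTE ->; by rewrite mul0r.
Qed.

Lemma sum_ind' {U : finType} (a : U) (F : U -> R) : \sum_u F u * (u == a)%:R = F a.
Proof. by rewrite -[RHS](sum_ind a); apply: eq_bigr => u _; rewrite mulrC. Qed.

Lemma norm2_0 k : norm2 (0 : 'cV[R]_k) = 0.
Proof. by rewrite /norm2 big1 ?sqrtr0 // => q _; rewrite mxE expr0n. Qed.


Lemma norm2_le1_coord k (x : 'cV[R]_k) q : norm2 x <= 1 -> `|x q 0| <= 1.
Proof.
move=> h.
have hs : \sum_(i < k) x i 0 ^+ 2 <= 1.
  by move: h; rewrite /norm2 -{1}sqrtr1 ler_sqrt.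
have : x q 0 ^+ 2 <= 1.
  apply: le_trans hs; rewrite (bigD1 q) //= lerDl; apply: sumr_ge0 => i _; apply: sqr_ge0.
move=> h2; rewrite ler_norml; apply/andP; split; nra.
Qed.

Lemma opnorm_bounded k (M : 'M[R]_k) (x : 'cV[R]_k) : norm2 x <= 1 ->
  norm2 (M *m x) <= Num.sqrt (\sum_p (\sum_q `|M p q|) ^+ 2).
Proof.
move=> hx; rewrite /norm2 ler_sqrt; last by apply: sumr_ge0 => p _; apply: sqr_ge0.
apply: ler_sum => p _; rewrite mxE.
rewrite -[X in X <= _]ger0_norm ?sqr_ge0 // normrX lerXn2r ?nnegrE ?normr_ge0 //.
- by apply: sumr_ge0 => q _; apply: normr_ge0.
- apply: (le_trans (ler_norm_sum _ _ _)); apply: ler_sum => q _.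
  rewrite normrM -[X in _ <= X]mulr1; apply: ler_wpM2l; first exact: normr_ge0.
  exact: norm2_le1_coord.
Qed.

Lemma norm2_ev k (q : 'I_k) : norm2 (delta_mx q 0 : 'cV[R]_k) = 1.
Proof.
rewrite /norm2 (eq_bigr (fun i => (i == q)%:R * 1)).
  by rewrite (sum_ind q (fun _ => 1)) sqrtr1.
move=> i _.
by rewrite mxE andbT; case: (i == q); rewrite ?expr1n ?expr0n ?mulr1 ?mul0r.
Qed.

Lemma opnorm_ge k (M : 'M[R]_k) p q : `|M p q| <= opnorm M.
Proof.
have hsup : has_sup (fun r : R => exists x : 'cV[R]_k, norm2 x <= 1 /\ r = norm2 (M *m x)).
  split; first by exists (norm2 (M *m 0)); exists 0; rewrite norm2_0; split.
  exists (Num.sqrt (\sum_p (\sum_q `|M p q|) ^+ 2)) => r [x [hx ->]].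
  exact: opnorm_bounded.
have h := sup_upper_bound hsup.
have hE : (fun r : R => exists x : 'cV[R]_k, norm2 x <= 1 /\ r = norm2 (M *m x)) (norm2 (M *m delta_mx q 0)).
  by exists (delta_mx q 0); rewrite norm2_ev; split.
rewrite /opnorm; apply: le_trans (h _ hE).
rewrite /norm2 -colE.
rewrite -sqrtr_sqr ler_sqrt; last by apply: sumr_ge0 => i _; apply: sqr_ge0.
rewrite (bigD1 p) //= mxE lerDl; apply: sumr_ge0 => i _; apply: sqr_ge0.
Qed.

Lemma Tq_eq (n : nat) (d : {set 'I_n} -> R) (i j k l i' j' k' l' : 'I_n) :
  midx i j k l =1 midx i' j' k' l' -> Tq d i j k l = Tq d i' j' k' l'.
Proof.
move=> H; have E : midx i j k l = midx i' j' k' l' by apply: boolp.funext.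
by rewrite /Tq /tau E.
Qed.

Lemma Tq12 n (d : {set 'I_n} -> R) i j k l : Tq d i j k l = Tq d j i k l.
Proof. by apply: Tq_eq => m; rewrite /midx; lia. Qed.
Lemma Tq23 n (d : {set 'I_n} -> R) i j k l : Tq d i j k l = Tq d i k j l.
Proof. by apply: Tq_eq => m; rewrite /midx; lia. Qed.
Lemma Tq34 n (d : {set 'I_n} -> R) i j k l : Tq d i j k l = Tq d i j l k.
Proof. by apply: Tq_eq => m; rewrite /midx; lia. Qed.

Lemma midx_count n (i j k l m : 'I_n) : midx i j k l m = count_mem m [:: i; j; k; l].
Proof. by rewrite /midx /= addn0 !addnA. Qed.

Lemma Tq_dist n (d : {set 'I_n} -> R) (i j k l : 'I_n) : uniq [:: i; j; k; l] ->
  Tq d i j k l = d [set i; j; k; l] / 24.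
Proof.
move=> hu.
have hm : forall m, midx i j k l m = (m \in [:: i; j; k; l]) by move=> m; rewrite midx_count count_uniq_mem.
rewrite /Tq /coef_at /tau.
have -> : [forall m, (midx i j k l m <= 1)%N] by apply/forallP => m; rewrite hm; case: (_ \in _).
have -> : [set m | midx i j k l m == 1%N] = [set i; j; k; l].
  apply/setP => m; rewrite !inE hm !inE -!orbA; by case: [|| _, _, _ | _].
rewrite big1 ?divn1 //; move=> m _; rewrite hm; by case: (_ \in _).
Qed.

Section Constr.
Variables (n s : nat).
Hypothesis hs : (0 < s)%N.
Hypothesis hn : (4 * (s * s) + 1 <= n)%N.
Variable e : 'I_(s*s) -> 'I_(s*s) -> bool.
Local Notation m := (s * s)%N.
Local Notation D := (2 * n + 2)%N.

Lemma pE_p : (0 < D)%N. Proof. lia. Qed.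
Lemma pV_p (b : 'I_n) : (1 + b < D)%N. Proof. have := ltn_ord b; lia. Qed.
Lemma pW_p (b : 'I_n) : (1 + n + b < D)%N. Proof. have := ltn_ord b; lia. Qed.
Lemma pF_p : (1 + n + n < D)%N. Proof. lia. Qed.
Definition pE : 'I_D := Ordinal pE_p.
Definition pV (b : 'I_n) : 'I_D := Ordinal (pV_p b).
Definition pW (b : 'I_n) : 'I_D := Ordinal (pW_p b).
Definition pF : 'I_D := Ordinal pF_p.

Lemma o0_p : (0 < n)%N. Proof. lia. Qed.
Lemma oX_p (t : 'I_(m + m)) : (1 + t < n)%N. Proof. have := ltn_ord t; lia. Qed.
Lemma oY_p (j : 'I_m) : (1 + (m + m) + j < n)%N. Proof. have := ltn_ord j; lia. Qed.
Lemma oZ_p (k : 'I_m) : (1 + (m + m) + m + k < n)%N. Proof. have := ltn_ord k; lia. Qed.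
Definition o0 : 'I_n := Ordinal o0_p.
Definition oX (t : 'I_(m + m)) : 'I_n := Ordinal (oX_p t).
Definition oY (j : 'I_m) : 'I_n := Ordinal (oY_p j).
Definition oZ (k : 'I_m) : 'I_n := Ordinal (oZ_p k).

Ltac neqv := apply/eqP => /(congr1 val) /=; lia.
Ltac eqv := apply/eqP/eqP => [/(congr1 val) /= ?|->//]; apply/val_inj => /=; lia.

Lemma pEV b : (pE == pV b) = false. Proof. neqv. Qed.
Lemma pEW b : (pE == pW b) = false. Proof. neqv. Qed.
Lemma pEF : (pE == pF) = false. Proof. neqv. Qed.
Lemma pVE b : (pV b == pE) = false. Proof. neqv. Qed.
Lemma pVW b c : (pV b == pW c) = false. Proof. move: (ltn_ord b) => ?; neqv. Qed.
Lemma pVF b : (pV b == pF) = false. Proof. move: (ltn_ord b) => ?; neqv. Qed.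
Lemma pWE b : (pW b == pE) = false. Proof. neqv. Qed.
Lemma pWV b c : (pW b == pV c) = false. Proof. move: (ltn_ord c) => ?; neqv. Qed.
Lemma pWF b : (pW b == pF) = false. Proof. move: (ltn_ord b) => ?; neqv. Qed.
Lemma pFE : (pF == pE) = false. Proof. neqv. Qed.
Lemma pFV b : (pF == pV b) = false. Proof. move: (ltn_ord b) => ?; neqv. Qed.
Lemma pFW b : (pF == pW b) = false. Proof. move: (ltn_ord b) => ?; neqv. Qed.
Lemma pVV b c : (pV b == pV c) = (b == c). Proof. eqv. Qed.
Lemma pWW b c : (pW b == pW c) = (b == c). Proof. eqv. Qed.

Lemma decodeD (q : 'I_D) : q = pE \/ (exists b, q = pV b) \/ (exists c, q = pW c) \/ q = pF.
Proof.
have hq := ltn_ord q.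
case: (ltnP (nat_of_ord q) 1) => h1.
  by left; apply/val_inj => /=; lia.
case: (ltnP (nat_of_ord q) (1 + n)) => h2.
  have hb : (nat_of_ord q - 1 < n)%N by lia.
  by right; left; exists (Ordinal hb); apply/val_inj => /=; lia.
case: (ltnP (nat_of_ord q) (1 + n + n)) => h3.
  have hb : (nat_of_ord q - 1 - n < n)%N by lia.
  by right; right; left; exists (Ordinal hb); apply/val_inj => /=; lia.
by right; right; right; apply/val_inj => /=; lia.
Qed.

Lemma sum_pred_eq (F : 'I_n -> R) (b : 'I_n) : \sum_c (b == c)%:R * F c = F b.
Proof. by rewrite -[RHS](sum_ind b); apply: eq_bigr => c _; rewrite eq_sym. Qed.

Lemma splitD (F : 'I_D -> R) :
  \sum_q F q = F pE + \sum_b F (pV b) + \sum_c F (pW c) + F pF.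
Proof.
have pu : forall q, (q == pE)%:R + \sum_b (q == pV b)%:R + \sum_c (q == pW c)%:R + (q == pF)%:R = 1 :> R.
  move=> q; case: (decodeD q) => [->|[[b ->]|[[c ->]|->]]].
  - by rewrite eqxx !big1 ?pEF ?addr0 // => b _; rewrite ?pEV ?pEW.
  - have -> : \sum_c (pV b == pW c)%:R = 0 :> R by apply: big1 => c _; rewrite pVW.
    rewrite pVE pVF (eq_bigr (fun c => (b == c)%:R * 1)) ?sum_pred_eq ?add0r ?addr0 // => c _; by rewrite pVV mulr1.
  - have -> : \sum_b (pW c == pV b)%:R = 0 :> R by apply: big1 => b _; rewrite pWV.
    rewrite pWE pWF (eq_bigr (fun b => (c == b)%:R * 1)) ?sum_pred_eq ?add0r ?addr0 // => b _; by rewrite pWW mulr1.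
  - by rewrite eqxx pFE !big1 ?add0r // => b _; rewrite ?pFV ?pFW.
rewrite (eq_bigr (fun q => ((q == pE)%:R + \sum_b (q == pV b)%:R + \sum_c (q == pW c)%:R + (q == pF)%:R) * F q)); last by move=> q _; rewrite pu mul1r.
under eq_bigr do rewrite !mulrDl.
rewrite !big_split /= !sum_ind.
congr (_ + _ + _ + _).
- rewrite (eq_bigr (fun q => \sum_b (q == pV b)%:R * F q)); last by move=> q _; rewrite mulr_suml.
  by rewrite exchange_big; apply: eq_bigr => b _; rewrite sum_ind.
- rewrite (eq_bigr (fun q => \sum_b (q == pW b)%:R * F q)); last by move=> q _; rewrite mulr_suml.
  by rewrite exchange_big; apply: eq_bigr => b _; rewrite sum_ind.
Qed.



Definition ind3 (x y z u v w : 'I_n) : R := ((x == u) && (y == v) && (z == w))%:R.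
Definition I6 (x y z u v w : 'I_n) : R :=
  ind3 x y z u v w + ind3 x y z u w v + ind3 x y z v u w + ind3 x y z v w u
  + ind3 x y z w u v + ind3 x y z w v u.
Definition ta (x y z : 'I_n) : R :=
  \sum_(j < m) \sum_(k < m) sg (e j k) * I6 x y z (oX (jpk j k)) (oY j) (oZ k) / 6.

Lemma I6_12 x y z u v w : I6 x y z u v w = I6 y x z u v w.
Proof. rewrite /I6 /ind3 !(andbC (y == _) (x == _)); ring. Qed.

Lemma I6_23 x y z u v w : I6 x y z u v w = I6 x z y u v w.
Proof. rewrite /I6 /ind3 -!andbA !(andbC (z == _) (y == _)); ring. Qed.

Lemma ta12 x y z : ta x y z = ta y x z.
Proof. by rewrite /ta; apply: eq_bigr => j _; apply: eq_bigr => k _; rewrite I6_12. Qed.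
Lemma ta23 x y z : ta x y z = ta x z y.
Proof. by rewrite /ta; apply: eq_bigr => j _; apply: eq_bigr => k _; rewrite I6_23. Qed.
Lemma ta13 x y z : ta x y z = ta z y x.
Proof. by rewrite ta12 ta23 ta12. Qed.

Lemma o0X t : (o0 == oX t) = false. Proof. neqv. Qed.
Lemma o0Y t : (o0 == oY t) = false. Proof. neqv. Qed.
Lemma o0Z t : (o0 == oZ t) = false. Proof. neqv. Qed.

Lemma ta0 y z : ta o0 y z = 0.
Proof.
rewrite /ta big1 // => j _; rewrite big1 // => k _.
by rewrite /I6 /ind3 !o0X !o0Y !o0Z /= !addr0 mulr0 mul0r.
Qed.

Definition Nm (i : 'I_n) : 'M[R]_D := \matrix_(q, r)
  (((q == pV i) && (r == pE))%:R
   + \sum_b \sum_c ta i b c * ((q == pW c) && (r == pV b))%:R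
   + ((q == pF) && (r == pW i))%:R).

Definition Am (i : 'I_n) : 'M[R]_D := if i == o0 then 1%:M else Nm i.

Definition ev (p : 'I_D) : 'cV[R]_D := delta_mx p 0.

Lemma Nm_cE i q : Nm i q pE = (q == pV i)%:R.
Proof.
rewrite mxE eqxx andbT pEW andbF addr0 big1 ?addr0 // => b _.
by rewrite big1 // => c _; rewrite pEV andbF mulr0.
Qed.

Lemma Nm_cV i q b : Nm i q (pV b) = \sum_c ta i b c * (q == pW c)%:R.
Proof.
rewrite mxE pVE pVW !andbF add0r addr0 exchange_big /=.
apply: eq_bigr => c _.
rewrite (eq_bigr (fun b' => (b == b')%:R * (ta i b' c * (q == pW c)%:R))).
  by rewrite sum_pred_eq.
by move=> b' _; rewrite pVV [(b == _)]eq_sym; case: (b' == b); case: (q == _); rewrite /= ?mulr0 ?mulr1 ?mul1r ?mul0r.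
Qed.

Lemma Nm_cW i q c : Nm i q (pW c) = (q == pF)%:R * (c == i)%:R.
Proof.
rewrite mxE pWE andbF add0r big1 ?add0r; last first.
  by move=> b _; rewrite big1 // => c' _; rewrite pWV andbF mulr0.
by rewrite pWW; case: (q == pF); case: (c == i); rewrite /= ?mulr0 ?mulr1 ?mul1r ?mul0r.
Qed.

Lemma Nm_cF i q : Nm i q pF = 0.
Proof.
rewrite mxE pFE pFW !andbF add0r addr0 big1 // => b _.
by rewrite big1 // => c _; rewrite pFV andbF mulr0.
Qed.

Lemma evE p q j : ev p q j = (q == p)%:R.
Proof. by rewrite mxE (ord1 j) eqxx andbT. Qed.

Lemma mul_ev (M : 'M[R]_D) p : M *m ev p = \matrix_(q, j) M q p.
Proof. by apply/matrixP => q j; rewrite -colE !mxE. Qed.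

Lemma NmE i : Nm i *m ev pE = ev (pV i).
Proof. by apply/matrixP => q j; rewrite mul_ev mxE Nm_cE evE. Qed.

Lemma NmV i b : Nm i *m ev (pV b) = \sum_c ta i b c *: ev (pW c).
Proof.
apply/matrixP => q j; rewrite mul_ev mxE Nm_cV summxE; apply: eq_bigr => c _.
by rewrite mxE evE.
Qed.

Lemma NmW i c : Nm i *m ev (pW c) = (c == i)%:R *: ev pF.
Proof. by apply/matrixP => q j; rewrite mul_ev mxE Nm_cW mxE evE mulrC. Qed.

Lemma NmF i : Nm i *m ev pF = 0.
Proof. by apply/matrixP => q j; rewrite mul_ev mxE Nm_cF mxE. Qed.



Lemma col_eq (M N : 'M[R]_D) : (forall q, M *m ev q = N *m ev q) -> M = N.
Proof.
move=> H; apply/matrixP => p q; have := congr1 (fun X : 'cV[R]_D => X p 0) (H q).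
by rewrite !mul_ev !mxE.
Qed.

Lemma NmVsum i j b : Nm i *m (Nm j *m ev (pV b)) = ta j b i *: ev pF.
Proof.
rewrite NmV mulmx_sumr (eq_bigr (fun c => (ta j b c * (c == i)%:R) *: ev pF)); last first.
  by move=> c _; rewrite -scalemxAr NmW scalerA.
by rewrite -scaler_suml sum_ind'.
Qed.

Lemma Nm_comm i j : Nm i *m Nm j = Nm j *m Nm i.
Proof.
apply: col_eq => q; rewrite -!mulmxA.
case: (decodeD q) => [->|[[b ->]|[[c ->]|->]]].
- rewrite !NmE !NmV; apply: eq_bigr => c _; by rewrite ta12.
- by rewrite !NmVsum ta13.
- by rewrite !NmW -!scalemxAr !NmF !scaler0.
- by rewrite !NmF !mulmx0.
Qed.

Lemma Am_comm i j : Am i *m Am j = Am j *m Am i.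
Proof.
rewrite /Am; case: (i == o0); case: (j == o0); rewrite ?mul1mx ?mulmx1 //.
exact: Nm_comm.
Qed.

Lemma inj_count {P Q : finType} (f : P -> Q) (q : Q) : injective f ->
  \sum_p (f p == q)%:R <= 1 :> R.
Proof.
move=> hf; case: (pickP (fun p => f p == q)) => [p0 /eqP hp0|hnone].
  rewrite (eq_bigr (fun p => (p == p0)%:R * 1)); first by rewrite sum_ind.
  move=> p _; rewrite mulr1 -hp0; congr (_%:R).
  by rewrite (inj_eq hf).
by rewrite big1 // => p _; rewrite hnone.
Qed.

Lemma count2 (UU WW : 'I_m * 'I_m -> 'I_n) (i c : 'I_n) :
  injective (fun p => (UU p, WW p)) ->
  \sum_(j < m) \sum_(k < m) ((i == UU (j, k)) && (c == WW (j, k)))%:R <= 1 :> R.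
Proof.
move=> hinj; rewrite pair_bigA /=.
apply: (le_trans _ (inj_count _ (i, c) hinj)).
by rewrite le_eqVlt; apply/orP; left; apply/eqP; apply: eq_bigr => [[j k]] _ /=; rewrite xpair_eqE !(eq_sym i) !(eq_sym c).
Qed.

Lemma sum_b_ind3 i c u v w : \sum_b ind3 i b c u v w = ((i == u) && (c == w))%:R.
Proof.
rewrite (eq_bigr (fun b => (b == v)%:R * ((i == u) && (c == w))%:R)) ?sum_ind //.
move=> b _; rewrite /ind3; case: (i == u); case: (b == v); case: (c == w);
  by rewrite /= ?mulr0 ?mul0r ?mulr1 ?mul1r.
Qed.

Lemma ind3_ge0 x y z u v w : 0 <= ind3 x y z u v w.
Proof. by rewrite /ind3 ler0n. Qed.

Lemma I6_ge0 x y z u v w : 0 <= I6 x y z u v w.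
Proof. by rewrite /I6 !addr_ge0 ?ind3_ge0. Qed.

Lemma sg_norm b : `|sg b| = 1.
Proof. by case: b; rewrite /sg ?normrN normr1. Qed.

Lemma ta_row i c : \sum_b `|ta i b c| <= 1.
Proof.
apply: (@le_trans _ _ (\sum_b \sum_(j < m) \sum_(k < m) I6 i b c (oX (jpk j k)) (oY j) (oZ k) / 6)).
  apply: ler_sum => b _; rewrite /ta.
  apply: (le_trans (ler_norm_sum _ _ _)); apply: ler_sum => j _.
  apply: (le_trans (ler_norm_sum _ _ _)); apply: ler_sum => k _.
  by rewrite normrM normrM sg_norm mul1r ger0_norm ?I6_ge0 // ger0_norm // invr_ge0.
have E : \sum_b \sum_(j < m) \sum_(k < m) I6 i b c (oX (jpk j k)) (oY j) (oZ k) / 6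
   = (\sum_(j < m) \sum_(k < m) \sum_b I6 i b c (oX (jpk j k)) (oY j) (oZ k)) / 6.
  rewrite !mulr_suml exchange_big /=; apply: eq_bigr => j _.
  rewrite exchange_big mulr_suml; apply: eq_bigr => k _; by rewrite mulr_suml.
rewrite E ler_pdivrMr // mul1r.
under eq_bigr do under eq_bigr do rewrite /I6 !big_split /= !sum_b_ind3.
under eq_bigr do rewrite !big_split /=.
rewrite !big_split /=.
have h1 : \sum_(j < m) \sum_(k < m) ((i == oX (jpk j k)) && (c == oZ k))%:R <= 1 :> R.
  apply: (count2 (fun p => oX (jpk p.1 p.2)) (fun p => oZ p.2)); move=> [j k] [j' k'] /= [] q1 q2;
  have := ltn_ord j; have := ltn_ord k; have := ltn_ord j'; have := ltn_ord k';
  move=> *; congr pair; apply/val_inj => /=; lia.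
have h2 : \sum_(j < m) \sum_(k < m) ((i == oX (jpk j k)) && (c == oY j))%:R <= 1 :> R.
  apply: (count2 (fun p => oX (jpk p.1 p.2)) (fun p => oY p.1)); move=> [j k] [j' k'] /= [] q1 q2;
  have := ltn_ord j; have := ltn_ord k; have := ltn_ord j'; have := ltn_ord k';
  move=> *; congr pair; apply/val_inj => /=; lia.
have h3 : \sum_(j < m) \sum_(k < m) ((i == oY j) && (c == oZ k))%:R <= 1 :> R.
  apply: (count2 (fun p => oY p.1) (fun p => oZ p.2)); move=> [j k] [j' k'] /= [] q1 q2;
  have := ltn_ord j; have := ltn_ord k; have := ltn_ord j'; have := ltn_ord k';
  move=> *; congr pair; apply/val_inj => /=; lia.
have h4 : \sum_(j < m) \sum_(k < m) ((i == oY j) && (c == oX (jpk j k)))%:R <= 1 :> R.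
  apply: (count2 (fun p => oY p.1) (fun p => oX (jpk p.1 p.2))); move=> [j k] [j' k'] /= [] q1 q2;
  have := ltn_ord j; have := ltn_ord k; have := ltn_ord j'; have := ltn_ord k';
  move=> *; congr pair; apply/val_inj => /=; lia.
have h5 : \sum_(j < m) \sum_(k < m) ((i == oZ k) && (c == oY j))%:R <= 1 :> R.
  apply: (count2 (fun p => oZ p.2) (fun p => oY p.1)); move=> [j k] [j' k'] /= [] q1 q2;
  have := ltn_ord j; have := ltn_ord k; have := ltn_ord j'; have := ltn_ord k';
  move=> *; congr pair; apply/val_inj => /=; lia.
have h6 : \sum_(j < m) \sum_(k < m) ((i == oZ k) && (c == oX (jpk j k)))%:R <= 1 :> R.
  apply: (count2 (fun p => oZ p.2) (fun p => oX (jpk p.1 p.2))); move=> [j k] [j' k'] /= [] q1 q2;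
  have := ltn_ord j; have := ltn_ord k; have := ltn_ord j'; have := ltn_ord k';
  move=> *; congr pair; apply/val_inj => /=; lia.
lra.
Qed.

Lemma ta_col i b : \sum_c `|ta i b c| <= 1.
Proof. by rewrite (eq_bigr (fun c => `|ta i c b|)) ?ta_row // => c _; rewrite ta23. Qed.

Lemma Nm_mulE i (x : 'cV[R]_D) q : (Nm i *m x) q 0 =
  Nm i q pE * x pE 0 + \sum_b Nm i q (pV b) * x (pV b) 0 + \sum_c Nm i q (pW c) * x (pW c) 0
  + Nm i q pF * x pF 0.
Proof. by rewrite mxE splitD. Qed.

Lemma Nmx_E i (x : 'cV[R]_D) : (Nm i *m x) pE 0 = 0.
Proof.
rewrite Nm_mulE Nm_cE Nm_cF pEV !mul0r addr0 add0r.
have -> : \sum_b Nm i pE (pV b) * x (pV b) 0 = 0.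
  by apply: big1 => b _; rewrite Nm_cV big1 ?mul0r // => c _; rewrite pEW mulr0.
have -> : \sum_c Nm i pE (pW c) * x (pW c) 0 = 0.
  by apply: big1 => c _; rewrite Nm_cW pEF !mul0r.
by rewrite addr0.
Qed.

Lemma Nmx_V i (x : 'cV[R]_D) b' : (Nm i *m x) (pV b') 0 = (b' == i)%:R * x pE 0.
Proof.
rewrite Nm_mulE Nm_cE Nm_cF pVV mul0r addr0.
have -> : \sum_b Nm i (pV b') (pV b) * x (pV b) 0 = 0.
  by apply: big1 => b _; rewrite Nm_cV big1 ?mul0r // => c _; rewrite pVW mulr0.
have -> : \sum_c Nm i (pV b') (pW c) * x (pW c) 0 = 0.
  by apply: big1 => c _; rewrite Nm_cW pVF !mul0r.
by rewrite !addr0.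
Qed.

Lemma Nmx_W i (x : 'cV[R]_D) c' : (Nm i *m x) (pW c') 0 = \sum_b ta i b c' * x (pV b) 0.
Proof.
rewrite Nm_mulE Nm_cE Nm_cF pWV !mul0r add0r addr0.
have -> : \sum_c Nm i (pW c') (pW c) * x (pW c) 0 = 0.
  by apply: big1 => c _; rewrite Nm_cW pWF !mul0r.
rewrite addr0; apply: eq_bigr => b _; rewrite Nm_cV; congr (_ * _).
rewrite (eq_bigr (fun c => (c' == c)%:R * ta i b c)) ?sum_pred_eq // => c _.
by rewrite pWW mulrC.
Qed.

Lemma Nmx_F i (x : 'cV[R]_D) : (Nm i *m x) pF 0 = x (pW i) 0.
Proof.
rewrite Nm_mulE Nm_cE Nm_cF pFV !mul0r add0r addr0.
have -> : \sum_b Nm i pF (pV b) * x (pV b) 0 = 0.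
  by apply: big1 => b _; rewrite Nm_cV big1 ?mul0r // => c _; rewrite pFW mulr0.
rewrite add0r (eq_bigr (fun c => (i == c)%:R * x (pW c) 0)) ?sum_pred_eq // => c _.
by rewrite Nm_cW eqxx mul1r eq_sym.
Qed.

Lemma norm2_ge0 k (x : 'cV[R]_k) : 0 <= norm2 x.
Proof. exact: sqrtr_ge0. Qed.

Lemma Nm_contr i (x : 'cV[R]_D) : norm2 (Nm i *m x) <= norm2 x.
Proof.
rewrite /norm2 ler_sqrt; last by apply: sumr_ge0 => q _; apply: sqr_ge0.
rewrite splitD [X in _ <= X]splitD Nmx_E Nmx_F expr0n /= add0r.
under eq_bigr do rewrite Nmx_V exprMn.
under [X in _ + X + _]eq_bigr do rewrite Nmx_W.
rewrite (eq_bigr (fun b => (b == i)%:R * x pE 0 ^+ 2)); last first.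
  by move=> b _; case: (b == i); rewrite ?expr1n ?expr0n.
rewrite sum_ind.
have hS := schur (fun b c => ta i b c) (fun b => x (pV b) 0) (ta_row i) (ta_col i).
have hW : x (pW i) 0 ^+ 2 <= \sum_c x (pW c) 0 ^+ 2.
  rewrite (bigD1 i) //= lerDl; apply: sumr_ge0 => c _; apply: sqr_ge0.
have hF : 0 <= x pF 0 ^+ 2 by apply: sqr_ge0.
lra.
Qed.

Lemma opnorm_le1 k (M : 'M[R]_k) : (forall x, norm2 (M *m x) <= norm2 x) -> opnorm M <= 1.
Proof.
move=> H; apply: ge_sup.
  by exists (norm2 (M *m 0)); exists 0; rewrite norm2_0; split.
by move=> r [x [hx ->]]; apply: le_trans (H x) hx.
Qed.

Lemma Am_contr i : opnorm (Am i) <= 1.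
Proof.
apply: opnorm_le1 => x; rewrite /Am; case: (i == o0); first by rewrite mul1mx.
exact: Nm_contr.
Qed.

Lemma ta0_2 x z : ta x o0 z = 0. Proof. by rewrite ta12 ta0. Qed.
Lemma ta0_3 x y : ta x y o0 = 0. Proof. by rewrite ta13 ta0. Qed.

Lemma chain0 : ev pE pF 0 = 0. Proof. by rewrite evE pFE. Qed.
Lemma chain1 a : (Nm a *m ev pE) pF 0 = 0. Proof. by rewrite NmE evE pFV. Qed.
Lemma chain2 a b : (Nm a *m (Nm b *m ev pE)) pF 0 = 0.
Proof.
rewrite NmE NmV summxE big1 // => c _.
by rewrite mxE evE pFW mulr0.
Qed.
Lemma chain3 a b c : (Nm a *m (Nm b *m (Nm c *m ev pE))) pF 0 = ta a b c.
Proof. by rewrite NmE NmVsum mxE evE eqxx mulr1 ta13 ta23. Qed.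
Lemma chain4 a b c d : (Nm a *m (Nm b *m (Nm c *m (Nm d *m ev pE)))) pF 0 = 0.
Proof. by rewrite NmE NmVsum -scalemxAr NmF scaler0 mxE. Qed.

Lemma G_form i j k l : (Am i *m Am j *m Am k *m Am l) pF pE =
  (i == o0)%:R * ta j k l + (j == o0)%:R * ta i k l + (k == o0)%:R * ta i j l
  + (l == o0)%:R * ta i j k.
Proof.
have -> : (Am i *m Am j *m Am k *m Am l) pF pE = (Am i *m (Am j *m (Am k *m (Am l *m ev pE)))) pF 0.
  by rewrite !mulmxA mul_ev [RHS]mxE.
rewrite /Am.
case: (eqVneq i o0) => [->|hi]; case: (eqVneq j o0) => [->|hj];
case: (eqVneq k o0) => [->|hk]; case: (eqVneq l o0) => [->|hl];
rewrite ?eqxx ?(negbTE hi) ?(negbTE hj) ?(negbTE hk) ?(negbTE hl) ?mul1mx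
  ?chain0 ?chain1 ?chain2 ?chain3 ?chain4 ?ta0 ?ta0_2 ?ta0_3;
rewrite ?mul0r ?mul1r ?addr0 ?add0r //.
Qed.

Lemma oX0 t : (oX t == o0) = false. Proof. neqv. Qed.
Lemma oY0 t : (oY t == o0) = false. Proof. neqv. Qed.
Lemma oZ0 t : (oZ t == o0) = false. Proof. neqv. Qed.
Lemma oXY t j : (oX t == oY j) = false. Proof. move: (ltn_ord t) => ?; neqv. Qed.
Lemma oXZ t j : (oX t == oZ j) = false. Proof. move: (ltn_ord t) => ?; neqv. Qed.
Lemma oYZ t j : (oY t == oZ j) = false. Proof. move: (ltn_ord t) => ?; neqv. Qed.
Lemma oYX t j : (oY j == oX t) = false. Proof. by rewrite eq_sym oXY. Qed.
Lemma oZX t j : (oZ j == oX t) = false. Proof. by rewrite eq_sym oXZ. Qed.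
Lemma oZY t j : (oZ j == oY t) = false. Proof. by rewrite eq_sym oYZ. Qed.

Definition set4 (j k : 'I_m) : {set 'I_n} := [set o0; oX (jpk j k); oY j; oZ k].

Lemma uniq4 j k : uniq [:: o0; oX (jpk j k); oY j; oZ k].
Proof. by rewrite /= !inE ?o0X ?o0Y ?o0Z ?oXY ?oXZ ?oYZ. Qed.

Lemma set4E j k : set4 j k = [set x in [:: o0; oX (jpk j k); oY j; oZ k]].
Proof. by apply/setP => x; rewrite !inE -!orbA. Qed.

Lemma card_set4 j k : #|set4 j k| = 4%N.
Proof. by rewrite set4E cardsE; apply/card_uniqP/uniq4. Qed.

Lemma set4_inj j k j' k' : (set4 j k == set4 j' k') = ((j, k) == (j', k')).
Proof.
apply/eqP/eqP => [H|[-> ->]//].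
have hY : oY j \in set4 j' k' by rewrite -H !inE eqxx !orbT.
have hZ : oZ k \in set4 j' k' by rewrite -H !inE eqxx !orbT.
move: hY hZ; rewrite !inE oY0 oZ0 oYX oZX oYZ oZY /= ?orbF => /eqP hY /eqP hZ.
move: (congr1 val hY) (congr1 val hZ) => /= h1 h2.
by congr pair; apply/val_inj => /=; lia.
Qed.

Definition Wr : R := (s * (5 * m + 2))%:R.

Definition dd (S : {set 'I_n}) : R :=
  \sum_(j < m) \sum_(k < m) (S == set4 j k)%:R * (sg (e j k) / Wr).

Lemma dd_set4 j k : dd (set4 j k) = sg (e j k) / Wr.
Proof.
rewrite /dd pair_bigA /=.
rewrite (eq_bigr (fun p => (p == (j, k))%:R * (sg (e p.1 p.2) / Wr))) ?sum_ind //.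
by move=> [j' k'] _ /=; rewrite set4_inj eq_sym.
Qed.

Lemma prod_set4 (x : 'I_n -> R) j k :
  \prod_(i in set4 j k) x i = x o0 * (x (oX (jpk j k)) * (x (oY j) * x (oZ k))).
Proof.
rewrite set4E (eq_bigl (fun i => i \in [:: o0; oX (jpk j k); oY j; oZ k])); last by move=> i; rewrite inE.
by rewrite -big_uniq ?uniq4 // !big_cons big_nil /= mulr1.
Qed.

Lemma quartic_dd (x : 'I_n -> R) : quartic_eval dd x =
  x o0 / Wr * \sum_(j < m) \sum_(k < m) sg (e j k) * x (oX (jpk j k)) * x (oY j) * x (oZ k).
Proof.
rewrite /quartic_eval /dd.
under eq_bigr do rewrite mulr_suml.
rewrite exchange_big /=.
rewrite mulr_sumr; apply: eq_bigr => j _.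
under eq_bigr do rewrite mulr_suml.
rewrite exchange_big /= mulr_sumr; apply: eq_bigr => k _.
rewrite (bigD1 (set4 j k)) /=; last by rewrite card_set4.
rewrite eqxx mul1r prod_set4 [X in _ + X]big1 ?addr0; first ring.
by move=> S /andP [_ /negbTE ->]; rewrite !mul0r.
Qed.

Lemma quartic_bound (x : 'I_n -> R) :
  (forall i, x i = 1 \/ x i = -1) ->
  `|\sum_(j < m) \sum_(k < m) sg (e j k) * x (oX (jpk j k)) * x (oY j) * x (oZ k)| <= Wr ->
  `|quartic_eval dd x| <= 1.
Proof.
move=> hx hb; rewrite quartic_dd normrM normrM normfV.
have hW : 0 < Wr by rewrite /Wr ltr0n muln_gt0 hs addn2.
have -> : `|x o0| = 1 by case: (hx o0) => ->; rewrite ?normrN normr1.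
rewrite mul1r (ger0_norm (ltW hW)) mulrC ler_pdivrMr // mul1r.
done.
Qed.

Lemma sum4_split (H1 H2 : 'I_n -> 'I_n -> 'I_n -> 'I_n -> R) :
  \sum_i \sum_j \sum_k \sum_l (H1 i j k l + H2 i j k l) =
  \sum_i \sum_j \sum_k \sum_l H1 i j k l + \sum_i \sum_j \sum_k \sum_l H2 i j k l.
Proof.
rewrite -big_split; apply: eq_bigr => i _; rewrite -big_split; apply: eq_bigr => j _.
rewrite -big_split; apply: eq_bigr => k _; by rewrite -big_split.
Qed.

Lemma swap3 {J : finType} (H : 'I_n -> 'I_n -> 'I_n -> J -> R) :
  \sum_j \sum_k \sum_l \sum_p H j k l p = \sum_p \sum_j \sum_k \sum_l H j k l p.
Proof.
under eq_bigr do under eq_bigr do rewrite exchange_big.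
under eq_bigr do rewrite exchange_big.
by rewrite exchange_big.
Qed.

Lemma coll1 (F : 'I_n -> R) (g : R) : \sum_l F l * ((l == o0)%:R * g) = F o0 * g.
Proof.
rewrite (eq_bigr (fun l => (l == o0)%:R * (F l * g))) ?sum_ind // => l _; ring.
Qed.

Definition T0 := \sum_j \sum_k \sum_l Tq dd o0 j k l * ta j k l.

Lemma pos1 : \sum_i \sum_j \sum_k \sum_l Tq dd i j k l * ((i == o0)%:R * ta j k l) = T0.
Proof.
rewrite (eq_bigr (fun i => (i == o0)%:R * \sum_j \sum_k \sum_l Tq dd i j k l * ta j k l)) ?sum_ind //.
move=> i _; rewrite mulr_sumr; apply: eq_bigr => j _; rewrite mulr_sumr; apply: eq_bigr => k _.
rewrite mulr_sumr; apply: eq_bigr => l _; ring.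
Qed.

Lemma pos2 : \sum_i \sum_j \sum_k \sum_l Tq dd i j k l * ((j == o0)%:R * ta i k l) = T0.
Proof.
apply: eq_bigr => i _.
rewrite (eq_bigr (fun j => (j == o0)%:R * \sum_k \sum_l Tq dd o0 i k l * ta i k l)) ?sum_ind //.
move=> j _; rewrite mulr_sumr; apply: eq_bigr => k _; rewrite mulr_sumr; apply: eq_bigr => l _.
case: (eqVneq j o0) => [->|_]; last by rewrite !mul0r mulr0.
by rewrite Tq12; ring.
Qed.

Lemma pos3 : \sum_i \sum_j \sum_k \sum_l Tq dd i j k l * ((k == o0)%:R * ta i j l) = T0.
Proof.
apply: eq_bigr => i _; apply: eq_bigr => j _.
rewrite (eq_bigr (fun k => (k == o0)%:R * \sum_l Tq dd o0 i j l * ta i j l)) ?sum_ind //.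
move=> k _; rewrite mulr_sumr; apply: eq_bigr => l _.
case: (eqVneq k o0) => [->|_]; last by rewrite !mul0r mulr0.
rewrite (@Tq_eq _ _ i j o0 l o0 i j l); first ring.
by move=> x; rewrite /midx; lia.
Qed.

Lemma pos4 : \sum_i \sum_j \sum_k \sum_l Tq dd i j k l * ((l == o0)%:R * ta i j k) = T0.
Proof.
apply: eq_bigr => i _; apply: eq_bigr => j _; apply: eq_bigr => k _.
rewrite coll1 (@Tq_eq _ _ i j k o0 o0 i j k) //.
by move=> x; rewrite /midx; lia.
Qed.

Lemma coll3 (F : 'I_n -> 'I_n -> 'I_n -> R) u v w :
  \sum_x \sum_y \sum_z F x y z * ind3 x y z u v w = F u v w.
Proof.
transitivity (\sum_x (x == u)%:R * (\sum_y (y == v)%:R * (\sum_z (z == w)%:R * F x y z))).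
  apply: eq_bigr => x _; rewrite mulr_sumr; apply: eq_bigr => y _.
  rewrite !mulr_sumr; apply: eq_bigr => z _; rewrite /ind3.
  by case: (x == u); case: (y == v); case: (z == w); rewrite /= ?mul0r ?mulr0 ?mul1r ?mulr1.
by rewrite sum_ind sum_ind sum_ind.
Qed.

Lemma coll6 (F : 'I_n -> 'I_n -> 'I_n -> R) u v w :
  \sum_x \sum_y \sum_z F x y z * I6 x y z u v w =
  F u v w + F u w v + F v u w + F v w u + F w u v + F w v u.
Proof.
rewrite -!coll3 -!big_split; apply: eq_bigr => x _; rewrite -!big_split; apply: eq_bigr => y _.
rewrite -!big_split; apply: eq_bigr => z _; rewrite /I6 /=; ring.
Qed.

Lemma T0E : T0 = (m * m)%:R / (24 * Wr).
Proof.
rewrite /T0 /ta.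
under eq_bigr do under eq_bigr do under eq_bigr do rewrite mulr_sumr.
under eq_bigr do under eq_bigr do under eq_bigr do under eq_bigr do rewrite mulr_sumr.
under eq_bigr do under eq_bigr do under eq_bigr do rewrite pair_bigA /=.
rewrite swap3.
rewrite (eq_bigr (fun p : 'I_m * 'I_m => 1 / (24 * Wr))); last first.
  move=> [a b] _ /=.
  have E : forall j k l, Tq dd o0 j k l * (sg (e a b) * I6 j k l (oX (jpk a b)) (oY a) (oZ b) / 6)
     = sg (e a b) / 6 * (Tq dd o0 j k l * I6 j k l (oX (jpk a b)) (oY a) (oZ b)) by move=> *; ring.
  under eq_bigr do under eq_bigr do under eq_bigr do rewrite E.
  under eq_bigr do under eq_bigr do rewrite -mulr_sumr.
  under eq_bigr do rewrite -mulr_sumr.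
  rewrite -mulr_sumr (coll6 (fun j k l => Tq dd o0 j k l)).
  set X := oX (jpk a b); set Y := oY a; set Z := oZ b.
  have P1 : Tq dd o0 X Z Y = Tq dd o0 X Y Z by apply: Tq_eq => x; rewrite /midx; lia.
  have P2 : Tq dd o0 Y X Z = Tq dd o0 X Y Z by apply: Tq_eq => x; rewrite /midx; lia.
  have P3 : Tq dd o0 Y Z X = Tq dd o0 X Y Z by apply: Tq_eq => x; rewrite /midx; lia.
  have P4 : Tq dd o0 Z X Y = Tq dd o0 X Y Z by apply: Tq_eq => x; rewrite /midx; lia.
  have P5 : Tq dd o0 Z Y X = Tq dd o0 X Y Z by apply: Tq_eq => x; rewrite /midx; lia.
  rewrite P1 P2 P3 P4 P5 Tq_dist ?uniq4 //.
  have -> : [set o0; X; Y; Z] = set4 a b by [].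
  rewrite dd_set4.
  have hW : Wr != 0 by rewrite /Wr pnatr_eq0 muln_eq0 negb_or -lt0n hs addn2.
  have hsg : sg (e a b) * sg (e a b) = 1 by case: (e a b); rewrite /sg ?mulr1 ?mulrNN ?mulr1.
  have hs' : 0 < s%:R :> R by rewrite ltr0n.
  have hside : (5 * (s%:R * s%:R) + 2 != 0 :> R) && (s%:R != 0 :> R).
    apply/andP; split; apply: lt0r_neq0 => //.
    have := mulr_ge0 (ler0n R s) (ler0n R s); lra.
  transitivity (sg (e a b) * sg (e a b) / (24 * Wr)); first by field.
  by rewrite hsg.
rewrite sumr_const card_prod !card_ord -mulr_natl.
have hs' : 0 < s%:R :> R by rewrite ltr0n.
have hside : (5 * (s%:R * s%:R) + 2 != 0 :> R) && (s%:R != 0 :> R).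
  apply/andP; split; apply: lt0r_neq0 => //.
  have := mulr_ge0 (ler0n R s) (ler0n R s); lra.
field; done.
Qed.


Lemma entryE :
  (\sum_(i < n) \sum_(j < n) \sum_(k < n) \sum_(l < n)
      Tq dd i j k l *: (Am i *m Am j *m Am k *m Am l)) pF pE = 4 * T0.
Proof.
transitivity (\sum_(i < n) \sum_(j < n) \sum_(k < n) \sum_(l < n)
      Tq dd i j k l * (Am i *m Am j *m Am k *m Am l) pF pE).
  rewrite summxE; apply: eq_bigr => i _; rewrite summxE; apply: eq_bigr => j _.
  rewrite summxE; apply: eq_bigr => k _; rewrite summxE; apply: eq_bigr => l _.
  by rewrite mxE.
under eq_bigr do under eq_bigr do under eq_bigr do under eq_bigr do rewrite G_form !mulrDr.
rewrite !sum4_split pos1 pos2 pos3 pos4; ring.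
Qed.
End Constr.

Theorem corollary4p5 :
  exists c : R, 0 < c /\ c <= 1 /\
  exists N : nat, forall n : nat, (N <= n)%N ->
    exists d : {set 'I_n} -> R,
      (forall x : 'I_n -> R, (forall i, x i = 1 \/ x i = -1) ->
         `|quartic_eval d x| <= 1) /\
      exists A : 'I_n -> 'M[R]_(2 * n + 2),
        (forall i j, A i *m A j = A j *m A i) /\
        (forall i, opnorm (A i) <= 1) /\
        c * Num.sqrt (n%:R) <=
          opnorm (\sum_(i < n) \sum_(j < n) \sum_(k < n) \sum_(l < n)
                    Tq d i j k l *: (A i *m A j *m A k *m A l)).
Proof.
exists (1 / 300); split; first by rewrite divr_gt0.
split; first by rewrite ler_pdivrMr // mul1r ler1n.
exists 9%N => n hn9.
have hsq := PeanoNat.Nat.sqrt_spec n (le_0_n n).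
set r := PeanoNat.Nat.sqrt n in hsq.
set s := (r %/ 3)%N.
have hr3 : (3 <= r)%N by nia.
have hs : (0 < s)%N by rewrite /s divn_gt0.
have hsr : (3 * s <= r /\ r <= 3 * s + 2)%N.
  have := divn_eq r 3; have := ltn_pmod r (isT : (0 < 3)%N); rewrite -/s; lia.
have hn : (4 * (s * s) + 1 <= n)%N by nia.
have hn36 : (n <= 36 * (s * s))%N by nia.
have [e He] := @cube_bound s hs.
exists (@dd n s hs hn e); split.
  move=> x hx; apply: quartic_bound => //.
  exact: (He (fun t => x (@oX n s hs hn t)) (fun j => x (@oY n s hs hn j)) (fun k => x (@oZ n s hs hn k)) (fun i => hx _) (fun i => hx _) (fun i => hx _)).
exists (@Am n s hs hn e); split; first exact: Am_comm.
split; first exact: Am_contr.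
set MM := (\sum_(i < n) _).
have HM := opnorm_ge _ MM (@pF n s hs hn) (@pE n s hs hn).
apply: (le_trans _ HM).
rewrite entryE T0E /Wr.
set S := s%:R : R.
have hS : 1 <= S by rewrite /S ler1n.
have hsqrt : Num.sqrt n%:R <= 6 * S.
  have -> : 6 * S = Num.sqrt ((6 * S) ^+ 2) by rewrite sqrtr_sqr ger0_norm //; lra.
  rewrite ler_sqrt; last by apply: sqr_ge0.
  have : (n%:R : R) <= (36 * (s * s))%:R by rewrite ler_nat.
  by rewrite natrM natrM -/S => h; apply: (le_trans h); rewrite le_eqVlt; apply/orP; left; apply/eqP; ring.
apply: le_trans (ler_norm _).
rewrite !natrM !natrD !natrM -/S.
have h1 : 1 / 300 * Num.sqrt n%:R <= S / 50.
  have := sqrtr_ge0 (n%:R : R); lra.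
apply: (le_trans h1).
set Dn := 24 * _.
have hS2 : 1 <= S * S by nra.
have hpos : 0 < Dn by rewrite /Dn; nra.
have -> : 4 * (S * S * (S * S) / Dn) = (4 * (S * S * (S * S))) / Dn by ring.
rewrite (ler_pdivlMr _ _ hpos) /Dn.
nra.
Qed.
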